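(* Let $\tau=(\tau,A,a)$ be a primitive substitution and let $u,v$ be non-empty prefixes of $X_\tau$ with $|u|<|v|$. Then there exist an integer $k\geq 1$ and morphisms $\lambda:R_v\to R_u^+$ and $\kappa:R_u\to R_v^+$ such that $$\tau_v\kappa=\kappa\tau_u,\quad \tau_u\lambda=\lambda\tau_v,\quad \kappa\lambda=\tau_v^k,\quad \lambda\kappa=\tau_u^k.$$
   Context: A substitution is a triple $(\tau,A,a)$: $A$ a finite alphabet, $\tau:A\to A^+$ a morphism (extended by concatenation), $a\in A$ with $\tau(a)$ starting with $a$; its fixed point $X_\tau$ is the unique sequence starting with $a$ with $\tau(X_\tau)=X_\tau$. It is primitive if some power of its matrix $M_\tau$ ($(i,j)$ entry = number of occurrences of $i$ in $\tau(j)$) is positive; then $X_\tau$ is uniformly recurrent. For a non-empty prefix $u$ of a uniformly recurrent sequence $X$, a return word on $u$ is a factor $X_{[i,j-1]}$ where $i<j$ are two successive occurrences of $u$ in $X$; there are finitely many, and $X$ factors uniquely as $X=m_0m_1m_2\cdots$ with each $m_n$ a return word on $u$. Enumerating the return words in order of first appearance in $(m_n)$ gives a bijection $\Theta_u$ from $R_u=\{1,\dots,N\}$ ($N$ the number of return words) to the set of return words, extended to a morphism $R_u^*\to A^*$, which is injective. The return substitution $\tau_u:R_u\to R_u^+$ is the unique morphism with $\Theta_u\tau_u=\tau\Theta_u$ (it exists, and $(\tau_u,R_u,1)$ is a primitive substitution). *)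

(* Defs.v *)
From mathcomp Require Import all_boot all_order all_algebra.
Set Implicit Arguments. Unset Strict Implicit. Unset Printing Implicit Defensive.
Import GRing.Theory Num.Theory.

Definition ext (B C : Type) (f : B -> seq C) (w : seq B) : seq C :=
  flatten (map f w).

Definition mpow (B : Type) (f : B -> seq B) (k : nat) (w : seq B) : seq B :=
  iter k (ext f) w.

Definition factor (A : Type) (X : nat -> A) (i n : nat) : seq A :=
  mkseq (fun j => X (i + j)) n.

Definition occurs_at (A : eqType) (X : nat -> A) (u : seq A) (i : nat) : bool :=
  factor X i (size u) == u.

Definition is_prefix (A : eqType) (X : nat -> A) (u : seq A) : bool :=
  occurs_at X u 0.

Definition subst_matrix (A : finType) (tau : A -> seq A) : 'M[int]_#|A| :=
  \matrix_(i, j) Posz (count_mem (enum_val i) (tau (enum_val j))).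

Definition primitive (A : finType) (tau : A -> seq A) : Prop :=
  exists k : nat, (0 < k)%N /\
    forall i j, (0 < (subst_matrix tau ^+ k) i j)%R.

Definition substitution (A : finType) (tau : A -> seq A) (a : A) : Prop :=
  (forall b, tau b != [::]) /\ ohead (tau a) = Some a.

(* X is the fixed point of (tau,A,a): X starts with a and tau(X) = X, i.e. the
   image of every prefix of X is a prefix of X (images are non-empty, so these
   images exhaust tau(X)). *)
Definition fixed_point (A : finType) (tau : A -> seq A) (a : A) (X : nat -> A)
  : Prop :=
  X 0 = a /\ forall n, is_prefix X (ext tau (factor X 0 n)).

Definition occ_enum (A : eqType) (X : nat -> A) (u : seq A) (o : nat -> nat)
  : Prop :=
  (forall n, o n < o n.+1)%N /\
  (forall i, occurs_at X u i <-> exists n, o n = i).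

(* Theta : 'I_N -> seq A is the enumeration Theta_u of the return words on u,
   in order of first appearance in the factorisation X = m_0 m_1 m_2 ...,
   where m_n = X_[o n, o (n+1) - 1] for the enumeration o of the occurrences
   of u (u is a prefix, so o 0 = 0). *)
Definition return_enum (A : eqType) (X : nat -> A) (u : seq A) (N : nat)
  (Theta : 'I_N -> seq A) : Prop :=
  exists o : nat -> nat, occ_enum X u o /\
    let m n := factor X (o n) (o n.+1 - o n) in
    injective Theta /\
    (forall n, exists r, m n = Theta r) /\
    (forall r, exists n, m n = Theta r) /\
    (forall r s : 'I_N, (r < s)%N ->
       forall n, m n = Theta s -> exists2 n', (n' < n)%N & m n' = Theta r).

Definition return_subst (A : eqType) (tau : A -> seq A) (N : nat)
  (Theta : 'I_N -> seq A) (sigma : 'I_N -> seq 'I_N) : Prop :=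
  forall r, ext Theta (sigma r) = ext tau (Theta r).

(* Main.v *)
Require Import Defs.
From mathcomp Require Import all_boot all_order all_algebra zify.
Set Implicit Arguments. Unset Strict Implicit. Unset Printing Implicit Defensive.


Lemma ext_cons B C (f : B -> seq C) x w : ext f (x :: w) = f x ++ ext f w.
Proof. by []. Qed.
Lemma ext_cat B C (f : B -> seq C) w1 w2 : ext f (w1 ++ w2) = ext f w1 ++ ext f w2.
Proof. by rewrite /ext map_cat flatten_cat. Qed.
Lemma ext_seq1 B C (f : B -> seq C) x : ext f [:: x] = f x.
Proof. by rewrite ext_cons cats0. Qed.
Lemma eq_ext B C (f g : B -> seq C) w : (forall b, f b = g b) -> ext f w = ext g w.
Proof. by move=> H; rewrite /ext (eq_map H). Qed.
Lemma ext_ext B C D (f : C -> seq D) (g : B -> seq C) w :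
  ext f (ext g w) = ext (fun b => ext f (g b)) w.
Proof. by elim: w => //= x w IH; rewrite !ext_cons ext_cat IH. Qed.
Lemma ext_id B (w : seq B) : ext (fun b => [:: b]) w = w.
Proof. by elim: w => //= x w IH; rewrite ext_cons IH. Qed.

Lemma mpowS B (f : B -> seq B) k w : mpow f k.+1 w = ext f (mpow f k w).
Proof. by []. Qed.
Lemma mpowSr B (f : B -> seq B) k w : mpow f k.+1 w = mpow f k (ext f w).
Proof. by rewrite /mpow iterSr. Qed.
Lemma mpowD B (f : B -> seq B) m n w : mpow f (m + n) w = mpow f m (mpow f n w).
Proof. by rewrite /mpow iterD. Qed.
Lemma mpow_nil B (f : B -> seq B) k : mpow f k [::] = [::].
Proof. by elim: k => // k IH; rewrite mpowS IH. Qed.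
Lemma mpow_cat B (f : B -> seq B) k w1 w2 :
  mpow f k (w1 ++ w2) = mpow f k w1 ++ mpow f k w2.
Proof. by elim: k => // k IH; rewrite !mpowS IH ext_cat. Qed.
Lemma mpow_ext B C (f : B -> seq B) (g : C -> seq B) k w :
  mpow f k (ext g w) = ext (fun b => mpow f k (g b)) w.
Proof.
elim: w => [|x w IH]; first exact: mpow_nil.
by rewrite !ext_cons mpow_cat IH.
Qed.

Lemma conj_ext B C (Th : B -> seq C) (sig : B -> seq B) (tau : C -> seq C) :
  (forall b, ext Th (sig b) = ext tau (Th b)) ->
  forall w, ext Th (ext sig w) = ext tau (ext Th w).
Proof. by move=> H w; rewrite !ext_ext; apply: eq_ext. Qed.
Lemma conj_mpow B C (Th : B -> seq C) (sig : B -> seq B) (tau : C -> seq C) :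
  (forall b, ext Th (sig b) = ext tau (Th b)) ->
  forall k w, ext Th (mpow sig k w) = mpow tau k (ext Th w).
Proof. by move=> H; elim=> // k IH w; rewrite !mpowS (conj_ext H) IH. Qed.

Lemma size_ext_ge B C (f : B -> seq C) n w :
  (forall b, n <= size (f b)) -> n * size w <= size (ext f w).
Proof.
move=> H; elim: w => [|x w IH]; first by rewrite muln0.
by rewrite ext_cons size_cat /= mulnS leq_add.
Qed.

Lemma mpow_size_ge (B : eqType) (f : B -> seq B) (Hne : forall b, f b != [::]) k w :
  size w <= size (mpow f k w).
Proof.
elim: k => // k IH; rewrite mpowS; apply: leq_trans IH _.
rewrite -[X in X <= _]mul1n; apply: size_ext_ge => b.
by rewrite lt0n size_eq0.
Qed.

Lemma size_factor A (X : nat -> A) i n : size (factor X i n) = n.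
Proof. exact: size_mkseq. Qed.
Lemma factor_split A (X : nat -> A) i a b :
  factor X i (a + b) = factor X i a ++ factor X (i + a) b.
Proof.
rewrite /factor /mkseq iotaD map_cat; congr (_ ++ _).
rewrite add0n -{1}(addn0 a) iotaDl -map_comp; apply: eq_map => j /=.
by rewrite addnA.
Qed.
Lemma take_factor A (X : nat -> A) i m n : m <= n -> take m (factor X i n) = factor X i m.
Proof.
by move=> H; rewrite -(subnKC H) factor_split take_size_cat // size_factor.
Qed.
Lemma drop_factor A (X : nat -> A) i m n : m <= n ->
  drop m (factor X i n) = factor X (i + m) (n - m).
Proof.
by move=> H; rewrite -{1}(subnKC H) factor_split drop_size_cat // size_factor.
Qed.
Lemma take_cat_eq A n (t Y Z : seq A) : take n Y = take n Z -> take n (t ++ Y) = take n (t ++ Z).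
Proof.
move=> H; rewrite !take_cat; case: ifP => // _; congr (_ ++ _).
by rewrite -(take_takel _ (leq_subr (size t) n)) H take_takel // leq_subr.
Qed.


Section Occ.
Variables (A : eqType) (X : nat -> A) (u : seq A) (o : nat -> nat).
Hypothesis Hocc : occ_enum X u o.

Lemma o_lt m n : (o m < o n) = (m < n).
Proof.
have H : {homo o : i j / i < j} by apply: homo_ltn; [exact: ltn_trans| exact: Hocc.1].
apply/idP/idP; last exact: H.
case: (ltngtP m n) => // [nm|->]; last by rewrite ltnn.
by move=> /(ltn_trans (H _ _ nm)); rewrite ltnn.
Qed.
Lemma o_le m n : (o m <= o n) = (m <= n).
Proof. by rewrite leqNgt o_lt -leqNgt. Qed.

Lemma occ_o n : occurs_at X u (o n).
Proof. by apply/(Hocc.2 _).2; exists n. Qed.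

Lemma no_occ n i : o n < i < o n.+1 -> ~~ occurs_at X u i.
Proof.
move=> /andP[h1 h2]; apply/negP => /(Hocc.2 _).1 [m Hm].
by move: h1 h2; rewrite -Hm !o_lt ltnS => h1 h2; move: (leq_ltn_trans h2 h1); rewrite ltnn.
Qed.

Variables (B : eqType) (Th : B -> seq A).
Hypothesis HT : forall n, exists r, factor X (o n) (o n.+1 - o n) = Th r.

Lemma decomp_o a b : a <= b -> exists w, size w = b - a /\ ext Th w = factor X (o a) (o b - o a).
Proof.
elim: b => [|b IH]; first by rewrite leqn0 => /eqP ->; exists [::]; rewrite !subnn; split.
rewrite leq_eqVlt => /orP[/eqP ->|]; first by exists [::]; rewrite !subnn; split.
rewrite ltnS => hab0; have [w [Hs He]] := IH hab0; have [r Hr] := HT b.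
have hab : o a <= o b by rewrite o_le.
have hb : o b <= o b.+1 by rewrite o_le.
exists (w ++ [:: r]); split; first by rewrite size_cat Hs /=; lia.
rewrite ext_cat ext_seq1 He -Hr.
have -> : o b.+1 - o a = (o b - o a) + (o b.+1 - o b) by lia.
by rewrite factor_split subnKC.
Qed.

Lemma decomp_occ i j : occurs_at X u i -> occurs_at X u j -> i < j ->
  exists w, w != [::] /\ ext Th w = factor X i (j - i).
Proof.
move=> /(Hocc.2 _).1 [a <-] /(Hocc.2 _).1 [b <-]; rewrite o_lt => hab.
have [w [Hs He]] := decomp_o (ltnW hab); exists w; split => //.
by rewrite -size_eq0 -lt0n Hs; lia.
Qed.

Hypothesis HT2 : forall r, exists n, factor X (o n) (o n.+1 - o n) = Th r.
Hypothesis Hinj : injective Th.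

Lemma Th_cat_u r : exists n, Th r ++ u = factor X (o n) ((o n.+1 - o n) + size u)
   /\ size (Th r) = o n.+1 - o n.
Proof.
have [n Hn] := HT2 r; exists n; split; last by rewrite -Hn size_factor.
have hn : o n < o n.+1 by rewrite o_lt.
rewrite factor_split subnKC ?(ltnW hn) // -Hn.
by rewrite (eqP (occ_o n.+1)).
Qed.

Lemma Th_ne r : Th r != [::].
Proof.
have [n [_ Hs]] := Th_cat_u r; rewrite -size_eq0 Hs.
have : o n < o n.+1 by rewrite o_lt.
lia.
Qed.

Lemma Th_u r : take (size u) (Th r ++ u) = u.
Proof.
have [n [-> _]] := Th_cat_u r; rewrite take_factor; last by lia.
exact: (eqP (occ_o n)).
Qed.

Lemma ext_u w : take (size u) (ext Th w ++ u) = u.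
Proof.
elim: w => [|r w IH]; first by rewrite /= take_size.
rewrite ext_cons -catA -[RHS](Th_u r); apply: take_cat_eq.
by rewrite IH take_size.
Qed.

Lemma no_short r s E1 E2 : Th r ++ ext Th E1 = Th s ++ ext Th E2 ->
  size (Th r) < size (Th s) -> False.
Proof.
move=> H hlt; set d := size (Th s) - size (Th r).
have Hs : Th s = Th r ++ take d (ext Th E1).
  have := congr1 (take (size (Th s))) H; rewrite (@take_size_cat _ _ (Th s)) // => <-.
  rewrite take_cat ifN; last by rewrite -leqNgt ltnW.
  by [].
have HE : ext Th E1 = take d (ext Th E1) ++ ext Th E2.
  have := H; rewrite {1}Hs -catA => /(congr1 (drop (size (Th r)))).
  by rewrite !drop_size_cat.
set t := take d (ext Th E1) in Hs HE.
have Htu : take (size u) (t ++ u) = u.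
  have H1 := ext_u E1; rewrite HE -catA in H1.
  rewrite -[RHS]H1; apply: take_cat_eq.
  by rewrite ext_u take_size.
have [n [Hf Hsz]] := Th_cat_u s.
have hn : o n < o n.+1 by rewrite o_lt.
have Hd : drop (size (Th r)) (Th s ++ u) = t ++ u by rewrite Hs -catA drop_size_cat.
move: Hd; rewrite Hf drop_factor; last by lia.
move=> Hd; have := congr1 (take (size u)) Hd; rewrite Htu take_factor; last by lia.
move=> Hocc'.
have : ~~ occurs_at X u (o n + size (Th r)).
  apply: (@no_occ n); apply/andP; split.
    by have := Th_ne r; rewrite -size_eq0 -lt0n; lia.
  lia.
by rewrite /occurs_at Hocc' eqxx.
Qed.

Lemma ext_inj w1 w2 : ext Th w1 = ext Th w2 -> w1 = w2.
Proof.
elim: w1 w2 => [|r w1 IH] [|s w2] //.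
- by move/(congr1 size); rewrite ext_cons size_cat /=; have := Th_ne s; rewrite -size_eq0 -lt0n; lia.
- by move/(congr1 size); rewrite ext_cons size_cat /=; have := Th_ne r; rewrite -size_eq0 -lt0n; lia.
rewrite !ext_cons => H.
case: (ltngtP (size (Th r)) (size (Th s))) => hc.
- by case: (no_short H hc).
- by case: (no_short (esym H) hc).
have Hrs : Th r = Th s.
  by have := congr1 (take (size (Th r))) H; rewrite take_size_cat // hc take_size_cat.
move: H; rewrite Hrs => /eqP; rewrite eqseq_cat // => /andP[_ /eqP /IH ->].
by rewrite (Hinj Hrs).
Qed.
End Occ.


Section Fix.
Variables (A : finType) (tau : A -> seq A) (a : A) (X : nat -> A).
Hypothesis Hsub : substitution tau a.
Hypothesis Hfix : fixed_point tau a X.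

Lemma mpow_prefix k n : factor X 0 (size (mpow tau k (factor X 0 n))) = mpow tau k (factor X 0 n).
Proof.
elim: k => [|k IH]; first by rewrite /= size_factor.
by rewrite mpowS -IH; apply/eqP; exact: Hfix.2.
Qed.

Definition P k i := size (mpow tau k (factor X 0 i)).

Lemma P_add k i j : i <= j -> P k j = P k i + size (mpow tau k (factor X i (j - i))).
Proof.
by move=> H; rewrite /P -{1}(subnKC H) factor_split add0n mpow_cat size_cat.
Qed.

Lemma mpow_factor k i j : i <= j ->
  mpow tau k (factor X i (j - i)) = factor X (P k i) (P k j - P k i).
Proof.
move=> H; have HP := P_add k H.
have : mpow tau k (factor X 0 j) = mpow tau k (factor X 0 i) ++ mpow tau k (factor X i (j - i)).
  by rewrite -{1}(subnKC H) factor_split add0n mpow_cat.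
rewrite -(mpow_prefix k j) -(mpow_prefix k i) -/(P k j) -/(P k i) => /(congr1 (drop (P k i))).
rewrite drop_size_cat ?size_factor // drop_factor; last by rewrite HP leq_addr.
by move=> <-.
Qed.

Lemma P_lt k i j : i < j -> P k i < P k j.
Proof.
move=> H; rewrite (P_add k (ltnW H)).
have := mpow_size_ge Hsub.1 k (factor X i (j - i)); rewrite size_factor => h.
by rewrite -[X in X < _]addn0 ltn_add2l; apply: leq_trans h; rewrite subn_gt0.
Qed.

Lemma occ_image k (u v : seq A) i : is_prefix X u -> occurs_at X u i ->
  size v <= size (mpow tau k u) -> is_prefix X v -> occurs_at X v (P k i).
Proof.
move=> Hu Hi Hs Hv.
have E : factor X 0 (i + size u) = factor X 0 i ++ u by rewrite factor_split add0n (eqP Hi).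
have E2 := mpow_prefix k (i + size u).
rewrite E mpow_cat in E2.
have E3 : factor X (P k i) (size (mpow tau k u)) = mpow tau k u.
  have := congr1 (drop (P k i)) E2.
  rewrite (@drop_size_cat _ (P k i) (mpow tau k (factor X 0 i))) // drop_factor; last by rewrite size_cat leq_addr.
  by rewrite size_cat add0n addKn.
have E4 : mpow tau k u = factor X 0 (size (mpow tau k u)).
  by rewrite -(eqP Hu) mpow_prefix.
rewrite /occurs_at; apply/eqP.
rewrite -(take_factor X (P k i) Hs) E3 E4 take_factor //.
exact/eqP.
Qed.
End Fix.



Import GRing.Theory Num.Theory.

Lemma count_ext (A : finType) (f : A -> seq A) w c :
  count_mem c (ext f w) = \sum_(l : A) count_mem l w * count_mem c (f l).
Proof.
elim: w => [|x w IH]; first by rewrite big1 // => l _.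
rewrite ext_cons count_cat IH /=.
under [RHS]eq_bigr => l _ do rewrite mulnDl.
rewrite big_split /=; congr (_ + _).
rewrite [RHS](bigD1 x) //= eqxx mul1n big1 ?addn0 // => l /negbTE.
by rewrite eq_sym => ->.
Qed.

Lemma mx_count (A : finType) (tau : A -> seq A) k i j :
  ((subst_matrix tau ^+ k.+1)%R) i j = Posz (count_mem (enum_val i) (mpow tau k.+1 [:: enum_val j])).
Proof.
elim: k i j => [|k IH] i j.
  by rewrite expr1 mxE /mpow /= ext_seq1.
rewrite exprS -mulmxE mxE.
rewrite (eq_bigr (fun l => Posz (count_mem (enum_val i) (tau (enum_val l)) *
    count_mem (enum_val l) (mpow tau k.+1 [:: enum_val j])))); last first.
  by move=> l _; rewrite IH mxE.
rewrite -(big_morph Posz PoszD (erefl _)) mpowS count_ext.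
congr Posz.
rewrite [RHS](reindex (@enum_val A xpredT)) /=; last by apply: onW_bij; exact: enum_val_bij.
by apply: eq_bigr => l _; rewrite mulnC.
Qed.

Lemma prim_mem (A : finType) (tau : A -> seq A) : primitive tau ->
  exists K, 0 < K /\ forall b c, c \in mpow tau K [:: b].
Proof.
case=> k0 [hk0 H]; case: k0 hk0 H => [//|k] _ H; exists k.+1; split => // b c.
have := H (enum_rank c) (enum_rank b); rewrite mx_count !enum_rankK ltz_nat.
by rewrite -has_count has_pred1.
Qed.

Lemma growth (A : finType) (tau : A -> seq A) a X (u v : seq A)
  (Hsub : substitution tau a) (Hfix : fixed_point tau a X) (Hprim : primitive tau)
  (Hu : is_prefix X u) (Hv : is_prefix X v) (Hu0 : u != [::]) (Hv0 : v != [::]) :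
  exists k, 0 < k /\ forall i, occurs_at X u i -> occurs_at X v (P tau X k i).
Proof.
case: (leqP #|A| 1) => hA.
  exists 1; split => // i _; rewrite /occurs_at; apply/eqP.
  apply: (etrans _ (eqP Hv)); apply: eq_mkseq => j.
  move/card_le1_eqP: hA => H.
  by rewrite (H (X 0) (X (P tau X 1 i + j))) // (H (X 0) (X (0 + j))).
have [K [K0 HK]] := prim_mem Hprim.
have [c1 [c2 [_ _ c12]]] := card_gt1P hA.
have H2 : forall b, 2 <= size (mpow tau K [:: b]).
  move=> b; have := HK b c1; have := HK b c2.
  case: (mpow tau K [:: b]) => [|x [|y s]] //=.
  by rewrite !inE => /eqP e2 /eqP e1; rewrite e1 e2 eqxx in c12.
have Hgrow : forall w, 2 * size w <= size (mpow tau K w).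
  move=> w; rewrite -[w in mpow _ _ w]ext_id mpow_ext; apply: size_ext_ge => b; exact: H2.
have Hn : forall n, size u + n <= size (mpow tau (K * n) u).
  elim => [|n IH]; first by rewrite muln0 addn0.
  rewrite mulnS mpowD; apply: leq_trans (Hgrow _).
  have : 0 < size u by rewrite lt0n size_eq0.
  lia.
exists (K * size v); split; first by rewrite muln_gt0 K0 lt0n size_eq0.
move=> i Hi; apply: (occ_image Hfix Hu Hi _ Hv).
by apply: leq_trans (Hn _); exact: leq_addl.
Qed.

Unset Implicit Arguments.
Set Strict Implicit.

Theorem proposition8 (A : finType) (tau : A -> seq A) (a : A) (X : nat -> A)
  (Hsub : substitution tau a) (Hprim : primitive tau) (Hfix : fixed_point tau a X)
  (u v : seq A) (Hu0 : u != [::]) (Hv0 : v != [::])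
  (Hu : is_prefix X u) (Hv : is_prefix X v) (Huv : (size u < size v)%N)
  (Nu : nat) (Thu : 'I_Nu -> seq A) (tau_u : 'I_Nu -> seq 'I_Nu)
  (HThu : return_enum X u Thu) (Htau_u : return_subst tau Thu tau_u)
  (Nv : nat) (Thv : 'I_Nv -> seq A) (tau_v : 'I_Nv -> seq 'I_Nv)
  (HThv : return_enum X v Thv) (Htau_v : return_subst tau Thv tau_v) :
  exists k : nat, (1 <= k)%N /\
  exists (lambda : 'I_Nv -> seq 'I_Nu) (kappa : 'I_Nu -> seq 'I_Nv),
    (forall r, lambda r != [::]) /\ (forall r, kappa r != [::]) /\
    (forall r, ext tau_v (kappa r) = ext kappa (tau_u r)) /\
    (forall r, ext tau_u (lambda r) = ext lambda (tau_v r)) /\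
    (forall r, ext kappa (lambda r) = mpow tau_v k [:: r]) /\
    (forall r, ext lambda (kappa r) = mpow tau_u k [:: r]).
Proof.
have Hvu : forall i, occurs_at X v i -> occurs_at X u i.
  move=> i /eqP Hi; rewrite /occurs_at; apply/eqP.
  have Huv' : u = take (size u) v.
    by rewrite -(eqP Hv) take_factor ?(eqP Hu) // ltnW.
  by rewrite -(take_factor X i (ltnW Huv)) Hi -Huv'.
case: HThu => ou [Hou Hu']; cbv zeta in Hu'; case: Hu' => [Hinju [HTu [HTu2 _]]].
case: HThv => ov [Hov Hv']; cbv zeta in Hv'; case: Hv' => [Hinjv [HTv [HTv2 _]]].
have [k [k0 Hk]] := growth Hsub Hfix Hprim Hu Hv Hu0 Hv0.
have Hlam : forall r : 'I_Nv, exists w, w != [::] /\ ext Thu w = Thv r.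
  move=> r; have [n <-] := HTv2 r.
  apply: (decomp_occ Hou HTu); [apply: Hvu; exact: occ_o Hov n
    | apply: Hvu; exact: occ_o Hov n.+1 | by rewrite (o_lt Hov)].
have Hkap : forall r : 'I_Nu, exists w, w != [::] /\ ext Thv w = mpow tau k (Thu r).
  move=> r; have [n <-] := HTu2 r.
  rewrite (mpow_factor Hfix); last by apply: ltnW; rewrite (o_lt Hou).
  apply: (decomp_occ Hov HTv); [apply: Hk; exact: occ_o Hou n
    | apply: Hk; exact: occ_o Hou n.+1 | apply: (P_lt _ Hsub); by rewrite (o_lt Hou)].
have [lambda Hl] := fin_all_exists Hlam.
have [kappa Hka] := fin_all_exists Hkap.
exists k; split => //; exists lambda, kappa.
split; first by move=> r; case: (Hl r).
split; first by move=> r; case: (Hka r).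
split.
  move=> r; apply: (ext_inj Hov HTv2 Hinjv).
  rewrite (conj_ext Htau_v) (proj2 (Hka r)) ext_ext (eq_ext _ (fun b => proj2 (Hka b))).
  by rewrite -mpow_ext Htau_u -mpowS mpowSr.
split.
  move=> r; apply: (ext_inj Hou HTu2 Hinju).
  rewrite (conj_ext Htau_u) (proj2 (Hl r)) ext_ext (eq_ext _ (fun b => proj2 (Hl b))).
  exact: (esym (Htau_v r)).
split.
  move=> r; apply: (ext_inj Hov HTv2 Hinjv).
  rewrite ext_ext (eq_ext _ (fun b => proj2 (Hka b))) -mpow_ext (proj2 (Hl r)).
  by rewrite (conj_mpow Htau_v) ext_seq1.
move=> r; apply: (ext_inj Hou HTu2 Hinju).
rewrite ext_ext (eq_ext _ (fun b => proj2 (Hl b))) (proj2 (Hka r)).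
by rewrite (conj_mpow Htau_u) ext_seq1.
Qed.
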